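(* Let $X=\mathbb{R}^2$, $A=\mathbb{R}\times\{0\}$ and $B=\operatorname{epi}(|\cdot|+1)=\{(s,t)\in\mathbb{R}^2: t\ge |s|+1\}$, and let $T:=\mathrm{Id}-P_A+P_BR_A$. Then $A\cap B=\varnothing$, and for every starting point $x\in[-1,1]\times\{0\}$ and every $n\in\{1,2,\ldots\}$ one has $T^n x=(0,n)\in B$; in particular $\|P_BT^nx\|=n\to\infty$, so $(P_BT^nx)_{n}$ is unbounded.
   Context: $P_C$ is the Euclidean projection onto a closed convex set $C$, and $R_C=2P_C-\mathrm{Id}$. *)

(* Defs.v *)
From Stdlib Require Import Reals.
Open Scope R_scope.

Definition R2 : Type := (R * R)%type.

Definition vadd (u v : R2) : R2 := (fst u + fst v, snd u + snd v).
Definition vsub (u v : R2) : R2 := (fst u - fst v, snd u - snd v).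
Definition vscal (a : R) (u : R2) : R2 := (a * fst u, a * snd u).

Definition norm2 (u : R2) : R := sqrt (fst u ^ 2 + snd u ^ 2).

Definition is_proj (C : R2 -> Prop) (x p : R2) : Prop :=
  C p /\ forall c, C c -> norm2 (vsub x p) <= norm2 (vsub x c).

Definition is_proj_map (C : R2 -> Prop) (P : R2 -> R2) : Prop :=
  forall x, is_proj C x (P x).

Definition refl (P : R2 -> R2) (x : R2) : R2 := vsub (vscal 2 (P x)) x.

Definition setA (u : R2) : Prop := snd u = 0.
Definition setB (u : R2) : Prop := snd u >= Rabs (fst u) + 1.

Definition Top (PA PB : R2 -> R2) (x : R2) : R2 :=
  vadd (vsub x (PA x)) (PB (refl PA x)).

Fixpoint iterate (f : R2 -> R2) (n : nat) (x : R2) : R2 :=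
  match n with
  | O => x
  | S k => f (iterate f k x)
  end.

(* Main.v *)
Require Import Defs.
From Stdlib Require Import Reals Lra Psatz.
Open Scope R_scope.

Lemma sq_le (u v : R2) : norm2 u <= norm2 v ->
  fst u ^ 2 + snd u ^ 2 <= fst v ^ 2 + snd v ^ 2.
Proof. unfold norm2; intro H; apply sqrt_le_0; try nra; auto. Qed.

Lemma PA_eq PA (hPA : is_proj_map setA PA) y : PA y = (fst y, 0).
Proof.
  destruct (hPA y) as [HA Hm]. specialize (Hm (fst y, 0) eq_refl).
  apply sq_le in Hm. destruct (PA y) as [p1 p2]. destruct y as [y1 y2].
  unfold setA in HA; simpl in *. subst p2. f_equal. nra.
Qed.

Lemma PB_apex PB (hPB : is_proj_map setB PB) a b :
  0 <= 1 - b -> Rabs a <= 1 - b -> PB (a, b) = (0, 1).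
Proof.
  intros H1 H2. destruct (hPB (a,b)) as [HB Hm].
  specialize (Hm (0,1)). assert (setB (0,1)) by (unfold setB; simpl; rewrite Rabs_R0; lra).
  specialize (Hm H). apply sq_le in Hm.
  destruct (PB (a,b)) as [c1 c2]. unfold setB in HB; simpl in *.
  assert (c1 = 0 /\ c2 = 1).
  { destruct (Rabs_le a (1-b)) ; revert HB H2;
    unfold Rabs; destruct (Rcase_abs c1); destruct (Rcase_abs a); intros; split; nra. }
  destruct H0; subst; auto.
Qed.

Lemma PB_in PB (hPB : is_proj_map setB PB) y : setB y -> PB y = y.
Proof.
  intro Hy. destruct (hPB y) as [HB Hm]. specialize (Hm y Hy). apply sq_le in Hm.
  destruct y as [y1 y2]. destruct (PB (y1,y2)) as [c1 c2]. simpl in *. pose proof (Rle_0_sqr (y1-c1)); pose proof (Rle_0_sqr (y2-c2)); unfold Rsqr in *. assert (c1 = y1) by nra. assert (c2 = y2) by nra. subst; reflexivity.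
Qed.

Lemma T_step PA PB (hPA : is_proj_map setA PA) y :
  Top PA PB y = vadd (0, snd y) (PB (fst y, - snd y)).
Proof.
  unfold Top, refl, vsub, vscal, vadd. rewrite (PA_eq PA hPA y). destruct y as [y1 y2]; simpl.
  replace (2 * y1 - y1) with y1 by ring. replace (2 * 0 - y2) with (- y2) by ring.
  f_equal; ring.
Qed.

Theorem mainTheorem3 (PA PB : R2 -> R2)
  (hPA : is_proj_map setA PA) (hPB : is_proj_map setB PB) :
  (forall u : R2, ~ (setA u /\ setB u)) /\
  (forall (x : R2), -1 <= fst x <= 1 -> snd x = 0 ->
     (forall n : nat, (1 <= n)%nat ->
        iterate (Top PA PB) n x = (0, INR n) /\
        setB (iterate (Top PA PB) n x) /\
        norm2 (PB (iterate (Top PA PB) n x)) = INR n) /\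
     (forall M : R, exists n : nat,
        M < norm2 (PB (iterate (Top PA PB) n x)))).
Proof.
  assert (Hit : forall x : R2, -1 <= fst x <= 1 -> snd x = 0 ->
     forall n : nat, (1 <= n)%nat -> iterate (Top PA PB) n x = (0, INR n)).
  { intros x Hx1 Hx2 n Hn. induction n as [|n IH]; [lia|].
    destruct n as [|n].
    - simpl. rewrite (T_step PA PB hPA). rewrite Hx2.
      rewrite (PB_apex PB hPB); [|lra|]. unfold vadd; simpl. f_equal; ring.
      replace (1 - - 0) with 1 by ring. apply Rabs_le. lra.
    - simpl iterate in *. rewrite IH by lia. rewrite (T_step PA PB hPA). cbn [fst snd].
      pose proof (pos_INR n).
      rewrite (PB_apex PB hPB); [|rewrite ?S_INR; lra|rewrite Rabs_R0; rewrite ?S_INR; lra].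
      unfold vadd; cbn [fst snd]. f_equal; ring. }
  assert (HB : forall n : nat, (1 <= n)%nat -> setB (0, INR n)).
  { intros n Hn. unfold setB; simpl. rewrite Rabs_R0. apply le_INR in Hn. simpl in Hn. lra. }
  assert (HN : forall n : nat, (1 <= n)%nat -> norm2 (PB (0, INR n)) = INR n).
  { intros n Hn. rewrite (PB_in PB hPB _ (HB n Hn)). unfold norm2; simpl.
    replace (0 * (0 * 1) + INR n * (INR n * 1)) with (INR n ^ 2) by ring.
    apply sqrt_pow2, pos_INR. }
  split.
  { intros [u1 u2] [Ha Hb]. unfold setA, setB in *; simpl in *. pose proof (Rabs_pos u1). lra. }
  intros x Hx1 Hx2. split.
  - intros n Hn. rewrite (Hit x Hx1 Hx2 n Hn). split; [auto|]. split; auto.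
  - intros M. destruct (INR_unbounded M) as [n Hn]. exists (S n).
    rewrite (Hit x Hx1 Hx2 (S n)) by lia. rewrite HN by lia. rewrite S_INR. lra.
Qed.
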